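(* Let $y_t=\theta_t+Z_t$, $t=1,\dots,n$, where $Z_t$ are independent zero-mean $\sigma$-subgaussian random variables, and let $\beta>0$. For any interval $[t_h,t_l]\subseteq[1,n]$, let $Y=pad_0(y_{t_h},\dots,y_{t_l})$ and $\Theta=pad_0(\theta_{t_h},\dots,\theta_{t_l})$. Then for each coordinate $i$, $|(T(HY))_i|\le|(H\Theta)_i|$ with probability at least $1-2n^{3-\beta/8}$.
   Context: $pad_0(v_a,\dots,v_b)$ is the vector $(v_a-\bar v,\dots,v_b-\bar v)$ with $\bar v$ the average of $v_a,\dots,v_b$, followed by zeros up to length $k$, the smallest power of $2$ that is $\ge b-a+1$. $H\in\mathbb{R}^{k\times k}$ is the orthonormal discrete Haar wavelet transform matrix. $T$ is coordinatewise soft thresholding at level $\lambda=\sigma\sqrt{\beta\log n}$: $T(u)_i=\mathrm{sign}(u_i)\max(|u_i|-\lambda,0)$. *)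

(* Defs.v *)
From HB Require Import structures.
From mathcomp Require Import all_boot all_order all_algebra.
From mathcomp Require Import all_classical all_reals all_analysis.
Set Implicit Arguments. Unset Strict Implicit. Unset Printing Implicit Defensive.
Import Order.TTheory GRing.Theory Num.Theory.
Local Open Scope classical_set_scope.
Local Open Scope ring_scope.

(* Length of the padded vector for the interval [th, tl]:
   k = 2 ^ (up_log 2 m), the smallest power of 2 that is >= m = tl - th + 1. *)
Definition padexp (th tl : nat) : nat := up_log 2 (tl - th).+1.
Definition padk (th tl : nat) : nat := 2 ^ padexp th tl.

Definition ext {R : realType} (n : nat) (v : 'I_n -> R) (t : nat) : R :=
  match insub t with Some i => v i | None => 0 end.

Definition pad0 {R : realType} (v : nat -> R) (th tl : nat) : 'cV[R]_(padk th tl) :=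
  let m := (tl - th).+1 in
  let avg := (\sum_(th <= t < tl.+1) v t) / m%:R in
  \col_(s < padk th tl) (if (s < m)%N then v (th + s)%N - avg else 0).

(* Orthonormal discrete Haar wavelet transform matrix of size 2^J.
   Row r = 2^j + m (1 <= r, 0 <= m < 2^j): the Haar wavelet at level j, shift m,
   supported on the block [m L, (m+1) L) with L = 2^(J-j), equal to
   +1/sqrt L on the first half of the block and -1/sqrt L on the second half. *)
Definition haar_entry {R : realType} (J r s : nat) : R :=
  if r == 0%N then 1 / Num.sqrt ((2 ^ J)%:R)
  else
    let j := trunc_log 2 r in
    let m := (r - 2 ^ j)%N in
    let L := (2 ^ (J - j))%N in
    if (m * L <= s < m * L + L./2)%N then 1 / Num.sqrt (L%:R)
    else if (m * L + L./2 <= s < m * L + L)%N then - (1 / Num.sqrt (L%:R))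
    else 0.

Definition haar {R : realType} (J : nat) : 'M[R]_(2 ^ J) :=
  \matrix_(r, s) @haar_entry R J r s.

Definition soft {R : realType} (lam : R) (k : nat) (u : 'cV[R]_k) : 'cV[R]_k :=
  \col_i (Num.sg (u i 0) * Num.max (`|u i 0| - lam) 0).

Definition mutually_independent {R : realType} {d : measure_display}
  {T : measurableType d} (P : probability T R) (n : nat)
  (X : 'I_n -> T -> R) : Prop :=
  forall B : 'I_n -> set R, (forall i, measurable (B i)) ->
    P (\bigcap_(i in [set: 'I_n]) (X i @^-1` B i)) =
    (\prod_(i < n) P (X i @^-1` B i))%E.

Definition subgaussian {R : realType} {d : measure_display}
  {T : measurableType d} (P : probability T R) (sigma : R) (X : T -> R) : Prop :=
  forall lam : R,
    ('E_P[fun w => expR (lam * X w)] <= (expR (lam ^+ 2 * sigma ^+ 2 / 2))%:E)%E.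

(* Main.v *)
Require Import Defs.
From HB Require Import structures.
From mathcomp Require Import all_boot all_order all_algebra.
From mathcomp Require Import all_classical all_reals all_analysis.
From mathcomp Require Import measurable_realfun measurable_fun_approximation.
From mathcomp Require Import ring lra zify.
Import Order.TTheory GRing.Theory Num.Theory.
Import numFieldNormedType.Exports.
Local Open Scope classical_set_scope.
Local Open Scope ring_scope.

Lemma integral_sum_indic (R : realType) d (T : measurableType d)
  (P : probability T R) (I : finType) (c : I -> R) (E : I -> set T) :
  (forall g, 0 <= c g) -> (forall g, measurable (E g)) ->
  (\int[P]_w (\sum_g c g * \1_(E g) w)%:E =
   \sum_g (c g)%:E * P (E g))%E.
Proof.
move=> c0 mE.
under eq_integral do rewrite -sumEFin.
rewrite ge0_integral_sum//; last first.
  by move=> g x _; rewrite lee_fin mulr_ge0.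
  by move=> g; apply/measurable_EFinP; apply: measurable_funM => //; exact: measurable_indic.
apply: eq_bigr => g _.
under eq_integral do rewrite EFinM.
rewrite ge0_integralZl//.
- by rewrite integral_indic// setIT.
- by apply/(measurable_EFinP _ (fun x => \1_(E g) x)); exact: measurable_indic.
- by rewrite lee_fin.
Qed.

Lemma indep_prod_step (R : realType) d (T : measurableType d)
  (P : probability T R) n (Z : 'I_n -> T -> R)
  (mZ : forall t, measurable_fun setT (Z t))
  (HI : mutually_independent P Z) N (a : 'I_n -> 'I_N -> R)
  (S : 'I_n -> 'I_N -> set R) :
  (forall t j, 0 <= a t j) -> (forall t j, measurable (S t j)) ->
  (\int[P]_w (\prod_t \sum_j a t j * \1_(S t j) (Z t w))%:E =
   \prod_t \int[P]_w (\sum_j a t j * \1_(S t j) (Z t w))%:E)%E.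
Proof.
move=> a0 mS.
have mpre t j : measurable (Z t @^-1` S t j).
  by rewrite -[_ @^-1` _]setTI; exact: mZ.
have ind t j w : \1_(S t j) (Z t w) = \1_(Z t @^-1` S t j) w :> R by [].
have PE A : measurable A -> P A = (fine (P A))%:E.
  by move=> mA; rewrite fineK // fin_num_measure.
pose Eg (g : {ffun 'I_n -> 'I_N}) := \bigcap_(t in [set: 'I_n]) (Z t @^-1` S t (g t)).
have mEg g : measurable (Eg g).
  apply: fin_bigcap_measurable => //; exact: finite_finset.
have LHS w : \prod_t \sum_j a t j * \1_(S t j) (Z t w) =
    \sum_(g : {ffun 'I_n -> 'I_N}) (\prod_t a t (g t)) * \1_(Eg g) w.
  rewrite bigA_distr_bigA; apply: eq_bigr => g _.
  rewrite big_split /=; congr (_ * _).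
  have [Ew|Ew] := pselect (Eg g w).
    rewrite indicE mem_set // big1 // => t _; rewrite indicE mem_set //.
    exact: Ew.
  rewrite indicE memNset //.
  have [t Ht] : exists t, ~ S t (g t) (Z t w).
    by apply/existsNP => H; apply: Ew => t _; exact: H.
  by rewrite (bigD1 t) //= indicE memNset // mul0r.
under eq_integral do rewrite LHS.
rewrite integral_sum_indic //; last by move=> g; exact: prodr_ge0.
under eq_bigr => g _ do rewrite /Eg (HI (fun t => S t (g t)) (fun t => mS t (g t))).
under [RHS]eq_bigr do (under eq_integral do (under eq_bigr do rewrite ind);
   rewrite integral_sum_indic //).
have PE' t j : P (Z t @^-1` S t j) = (fine (P (Z t @^-1` S t j)))%:E.
  exact: PE.
under eq_bigr => g _ do rewrite (eq_bigr _ (fun t _ => PE' t (g t))) prodEFin -EFinM.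
have PE2 t j : ((a t j)%:E * P (Z t @^-1` S t j))%E = (a t j * fine (P (Z t @^-1` S t j)))%:E.
  by rewrite EFinM -PE'.
under [RHS]eq_bigr => t _ do rewrite (eq_bigr _ (fun j _ => PE2 t j)) sumEFin.
rewrite sumEFin prodEFin; congr EFin; rewrite bigA_distr_bigA.
by apply: eq_bigr => g _; rewrite big_split.
Qed.

Lemma prode_le_fin (R : realType) (I : finType) (x : I -> \bar R) (M : I -> R) :
  (forall i, (0 <= x i)%E) -> (forall i, (x i <= (M i)%:E)%E) ->
  (\prod_i x i <= (\prod_i M i)%:E)%E.
Proof.
move=> x0 xM; rewrite -prodEFin.
elim: (index_enum I) => [|h s IH]; first by rewrite !big_nil.
rewrite !big_cons; apply: lee_pmul => //; exact: prode_ge0.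
Qed.

Lemma indep_mgf (R : realType) d (T : measurableType d)
  (P : probability T R) n (Z : 'I_n -> T -> R)
  (mZ : forall t, measurable_fun setT (Z t))
  (HI : mutually_independent P Z) (c M : 'I_n -> R) :
  (forall t, \int[P]_w (expR (c t * Z t w))%:E <= (M t)%:E)%E ->
  (\int[P]_w (expR (\sum_t c t * Z t w))%:E <= (\prod_t M t)%:E)%E.
Proof.
move=> HM.
pose f t : R -> \bar R := fun x => (expR (c t * x))%:E.
have mf t : measurable_fun setT (f t).
  apply/(measurable_EFinP _ (fun x => expR (c t * x))).
  apply: measurableT_comp; first exact: measurable_expR.
  exact: measurable_funM.
have f0 t x : [set: R] x -> (0 <= f t x)%E by move=> _; rewrite lee_fin expR_ge0.
pose phi k t x := approx setT (f t) k x.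
pose K k := (k * 2 ^ k)%N.
pose aa k (j : 'I_(K k).+1) : R := if (j < K k)%N then j%:R * 2 ^- k else k%:R.
pose SS t k (j : 'I_(K k).+1) := if (j < K k)%N then dyadic_approx setT (f t) k j
  else integer_approx setT (f t) k.
have phiE k t x : phi k t x = \sum_j aa k j * \1_(SS t k j) x.
  rewrite /phi /approx big_ord_recr /=; congr (_ + _).
    by apply: eq_bigr => j _; rewrite /aa /SS /= ltn_ord.
  by rewrite /aa /SS /= ltnn.
have aa0 k j : 0 <= aa k j by rewrite /aa; case: ifP.
have mSS t k j : measurable (SS t k j).
  rewrite /SS; case: ifP => _.
    rewrite /dyadic_approx; case: ifPn => // _.
    rewrite -preimage_comp.
    by apply: (mf t) => //; apply/measurable_image_EFin; exact: measurable_itv.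
  exact: emeasurable_fun_c_infty.
have phi0 k t x : 0 <= phi k t x.
  by rewrite phiE; apply: sumr_ge0 => j _; rewrite mulr_ge0.
have mphi k t : measurable_fun setT (fun w => phi k t (Z t w)).
  under eq_fun do rewrite phiE.
  apply: measurable_sum => j; apply: measurable_funM => //.
  apply: measurableT_comp => //; exact: measurable_indic.
pose g' k w := (\prod_t phi k t (Z t w))%:E.
have mg' k : measurable_fun setT (g' k).
  apply/(measurable_EFinP _ (fun w => \prod_t phi k t (Z t w))).
  by apply: measurable_prod => t _; exact: mphi.
have g'0 k w : [set: T] w -> (0 <= g' k w)%E.
  by move=> _; rewrite lee_fin; apply: prodr_ge0 => t _.
have nd_g' w : [set: T] w -> {homo g'^~ w : a b / (a <= b)%N >-> (a <= b)%E}.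
  move=> _ a b ab; rewrite lee_fin; apply: ler_prod => t _.
  rewrite phi0 /=; move: (nd_approx setT (f t) ab) => /lefP; exact.
have lim_g' w : limn (g'^~ w) = (expR (\sum_t c t * Z t w))%:E.
  apply: cvg_lim => //; rewrite expR_sum.
  apply: cvg_EFin; first by apply: nearW => k.
  apply: cvg_big => //; first exact: mul_continuous.
  move=> t _; have := @cvg_approx _ _ _ setT (f t) (Z t w) (f0 t) Logic.I (ltry _).
  by [].
rewrite (eq_integral (fun w => limn (g'^~ w))); last by move=> w _; rewrite lim_g'.
rewrite (monotone_convergence P measurableT mg' g'0 nd_g').
apply: lime_le.
  apply: ereal_nondecreasing_is_cvgn => a b ab.
  apply: ge0_le_integral => // w _; [exact: g'0 | exact: (nd_g' w Logic.I _ _ ab)].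
apply: nearW => k.
rewrite /g'.
under eq_integral do rewrite (eq_bigr _ (fun t _ => phiE k t (Z t _))).
rewrite indep_prod_step //.
apply: prode_le_fin => t.
  by apply: integral_ge0 => w _; rewrite lee_fin; apply: sumr_ge0 => j _; rewrite mulr_ge0.
apply: le_trans (HM t); apply: ge0_le_integral => //.
- by move=> w _; rewrite lee_fin; apply: sumr_ge0 => j _; rewrite mulr_ge0.
- apply/(measurable_EFinP _ (fun w => \sum_j aa k j * \1_(SS t k j) (Z t w))).
  under eq_fun do rewrite -phiE; exact: mphi.
- apply/(measurable_EFinP _ (fun w => expR (c t * Z t w))).
  apply: measurableT_comp; first exact: measurable_expR.
  exact: measurable_funM.
- by move=> w _; rewrite -phiE; exact: (le_approx k (f0 t)).
Qed.

Lemma measurable_ge (R : realType) d (T : measurableType d) (g : T -> R) (r : R) :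
  measurable_fun setT g -> measurable [set w | r <= g w].
Proof.
move=> mg; have := mg measurableT `[r, +oo[%classic (measurable_itv _).
by rewrite setTI; congr measurable; apply/seteqP; split => w /=; rewrite in_itv /= andbT.
Qed.

Lemma tail_one (R : realType) d (T : measurableType d)
  (P : probability T R) n (Z : 'I_n -> T -> R)
  (mZ : forall t, measurable_fun setT (Z t))
  (HI : mutually_independent P Z) (sigma : R) :
  0 < sigma -> (forall t, subgaussian P sigma (Z t)) ->
  forall (b : 'I_n -> R) (lam : R), \sum_t b t ^+ 2 <= 1 -> 0 <= lam ->
  (P [set w | (lam <= \sum_t b t * Z t w)%R] <=
    (expR (- (lam ^+ 2 / (2 * sigma ^+ 2))))%:E)%E.
Proof.
move=> s0 Hsg b lam Hb l0.
pose X w := \sum_t b t * Z t w.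
have mX : measurable_fun setT X.
  by apply: measurable_sum => t; apply: measurable_funM.
pose A := [set w | lam <= X w].
have mA : measurable A by exact: measurable_ge.
change (P A <= (expR (- (lam ^+ 2 / (2 * sigma ^+ 2))))%:E)%E.
have [->|lpos] := eqVneq lam 0.
  by rewrite expr0n /= mul0r oppr0 expR0; apply: probability_le1; exact: measurable_ge.
have lgt0 : 0 < lam by rewrite lt_neqAle eq_sym lpos l0.
pose mu := lam / sigma ^+ 2.
have mu0 : 0 < mu by rewrite divr_gt0 // exprn_gt0.
have key : ((expR (mu * lam))%:E * P A <=
    (expR (mu ^+ 2 * sigma ^+ 2 / 2))%:E)%E.
  have -> : ((expR (mu * lam))%:E * P A =
      \int[P]_w (expR (mu * lam) * \1_A w)%:E)%E.
    under eq_integral do rewrite EFinM.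
    rewrite ge0_integralZl//; try by rewrite integral_indic// setIT.
    all: try by rewrite lee_fin expR_ge0.
    by apply: measurableT_comp => //; exact: measurable_indic.
  apply: (@le_trans _ _ (\int[P]_w (expR (\sum_t (mu * b t) * Z t w))%:E)%E).
    apply: ge0_le_integral => //.
    - apply/(measurable_EFinP _ (fun x => expR (mu * lam) * \1_A x)).
      by apply: measurable_funM => //; exact: measurable_indic.
    - apply/(measurable_EFinP _ (fun w => expR (\sum_t (mu * b t) * Z t w))).
      apply: measurableT_comp; first exact: measurable_expR.
      by apply: measurable_sum => t; apply: measurable_funM.
    - move=> w _; rewrite lee_fin indicE.
      have [Aw|Aw] := boolP (w \in A).
        rewrite mulr1 ler_expR.
        under eq_bigr do rewrite -mulrA.
        rewrite -mulr_sumr ler_pM2l //.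
        by move: Aw; rewrite inE.
      by rewrite mulr0 expR_ge0.
  have H := (@indep_mgf _ _ _ P n Z mZ HI (fun t => mu * b t) (fun t => expR ((mu * b t) ^+ 2 * sigma ^+ 2 / 2))).
  apply: (le_trans (H _)); last first.
    rewrite -expR_sum lee_fin ler_expR.
    have -> : \sum_t (mu * b t) ^+ 2 * sigma ^+ 2 / 2 =
        (mu ^+ 2 * sigma ^+ 2 / 2) * \sum_t b t ^+ 2.
      by rewrite mulr_sumr; apply: eq_bigr => t _; ring.
    by rewrite -[X in _ <= X]mulr1 ler_wpM2l // mulr_ge0 ?invr_ge0 ?ler0n // mulr_ge0 ?sqr_ge0.
  move=> t; have := Hsg t (mu * b t); rewrite unlock; exact.
have E1 : (expR (- (lam ^+ 2 / (2 * sigma ^+ 2)))) =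
   expR (mu ^+ 2 * sigma ^+ 2 / 2) / expR (mu * lam).
  rewrite -expRN -expRD; congr expR; rewrite /mu.
  by field; rewrite gt_eqF.
rewrite E1 EFinM lee_pdivlMr ?expR_gt0 // muleC.
by move: key; rewrite muleC.
Qed.

Lemma measurable_gt (R : realType) d (T : measurableType d) (g : T -> R) (r : R) :
  measurable_fun setT g -> measurable [set w | r < g w].
Proof.
move=> mg; have := mg measurableT `]r, +oo[%classic (measurable_itv _).
by rewrite setTI; congr measurable; apply/seteqP; split => w /=; rewrite in_itv /= andbT.
Qed.

Lemma tail_two (R : realType) d (T : measurableType d)
  (P : probability T R) n (Z : 'I_n -> T -> R)
  (mZ : forall t, measurable_fun setT (Z t))
  (HI : mutually_independent P Z) (sigma : R) :
  0 < sigma -> (forall t, subgaussian P sigma (Z t)) ->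
  forall (a : 'I_n -> R) (lam : R), \sum_t a t ^+ 2 <= 1 -> 0 <= lam ->
  (P [set w | (lam < `|\sum_t a t * Z t w|)%R] <=
    (2 * expR (- (lam ^+ 2 / (2 * sigma ^+ 2))))%:E)%E.
Proof.
move=> s0 Hsg a lam Ha l0.
pose X w := \sum_t a t * Z t w.
have mX : measurable_fun setT X.
  by apply: measurable_sum => t; apply: measurable_funM.
pose A := [set w | lam <= X w].
pose B := [set w | lam <= \sum_t (- a t) * Z t w].
pose C := [set w | lam < `|X w|].
change (P C <= (2 * expR (- (lam ^+ 2 / (2 * sigma ^+ 2))))%:E)%E.
have mA : measurable A by exact: measurable_ge.
have mB : measurable B.
  by apply: measurable_ge; apply: measurable_sum => t; apply: measurable_funM.
have mC : measurable C.
  by apply: measurable_gt; apply: measurableT_comp => //; exact: normr_measurable.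
apply: (@le_trans _ _ (P (A `|` B))).
  apply: le_measure; rewrite ?inE //; first exact: measurableU.
  move=> w; rewrite /C /A /B /= => H.
  have [X0|X0] := leP 0 (X w).
    by left; move: H; rewrite ger0_norm // => /ltW.
  right; move: H; rewrite ltr0_norm // => /ltW.
  under eq_bigr do rewrite mulNr.
  by rewrite sumrN.
apply: le_trans (measureU2 _ mA mB) _.
have HA := @tail_one _ _ _ P n Z mZ HI sigma s0 Hsg a lam Ha l0.
have HB : (P B <= (expR (- (lam ^+ 2 / (2 * sigma ^+ 2))))%:E)%E.
  apply: (@tail_one _ _ _ P n Z mZ HI sigma s0 Hsg) => //.
  by under eq_bigr do rewrite sqrrN.
have -> : 2 * expR (- (lam ^+ 2 / (2 * sigma ^+ 2))) = expR (- (lam ^+ 2 / (2 * sigma ^+ 2))) + expR (- (lam ^+ 2 / (2 * sigma ^+ 2))) by ring.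
by rewrite EFinD; exact: leeD.
Qed.

Lemma count_block (R : realType) (a L k : nat) :
  \sum_(0 <= s < k) (if (a <= s < a + L)%N then (L%:R)^-1 else 0 : R) <= 1.
Proof.
have [->|L0] := eqVneq L 0%N.
  by rewrite big1 // => s _; rewrite addn0; case: leqP => //= /leq_gtF ->.
apply: (@le_trans _ _ (\sum_(0 <= s < k + (a + L)) (if (a <= s < a + L)%N then (L%:R)^-1 else 0 : R))).
  rewrite [X in _ <= X](@big_cat_nat _ _ _ k) ?leq_addr //= lerDl.
  by apply: sumr_ge0 => s _; case: ifP.
rewrite (@big_cat_nat _ _ _ a) //=; last by lia.
rewrite (@big_cat_nat _ _ _ (a + L) a) /= ?leq_addr ?leq_addl //.
rewrite big1_seq ?add0r; last first.
  by move=> s /andP[_]; rewrite mem_index_iota => /andP[_ sa]; rewrite (leqNgt a s) sa.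
rewrite [X in _ + X]big1_seq ?addr0; last first.
  by move=> s /andP[_]; rewrite mem_index_iota => /andP[sa _]; rewrite (ltnNge s (a + L)) sa andbF.
rewrite (eq_big_nat _ _ (F2 := fun => (L%:R)^-1)); last by move=> s ->.
by rewrite sumr_const_nat addKn -(mulr_natr (L%:R^-1)) mulrC divff // pnatr_eq0.
Qed.

Lemma haar_row_norm (R : realType) J r :
  \sum_(0 <= s < 2 ^ J) (@haar_entry R J r s) ^+ 2 <= 1.
Proof.
rewrite /haar_entry; case: eqP => [_|_].
  have e : (1 / Num.sqrt (2 ^ J)%:R) ^+ 2 = ((2 ^ J)%:R)^-1 :> R.
    by rewrite expr_div_n expr1n sqr_sqrtr // div1r.
  rewrite (eq_bigr (fun => ((2 ^ J)%:R)^-1)); last by move=> s _; rewrite e.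
  by rewrite sumr_const_nat subn0 -(mulr_natr ((2 ^ J)%:R^-1)) mulrC divff // pnatr_eq0 expn_eq0.
set j := trunc_log 2 r; set m := (r - 2 ^ j)%N; set L := (2 ^ (J - j))%N.
have L0 : (0 < L)%N by rewrite expn_gt0.
have e : (1 / Num.sqrt L%:R) ^+ 2 = (L%:R)^-1 :> R.
  by rewrite expr_div_n expr1n sqr_sqrtr // div1r.
apply: le_trans (count_block R (m * L) L (2 ^ J)).
apply: ler_sum_nat => s _.
case: ifPn => [/andP[h1 h2]|_].
  rewrite e (_ : (m * L <= s < m * L + L)%N) //.
  by rewrite h1 (leq_trans h2) // leq_add2l leq_half_double -addnn leqW // leq_addr.
case: ifPn => [/andP[h1 h2]|_].
  rewrite sqrrN e (_ : (m * L <= s < m * L + L)%N) //.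
  by rewrite h2 andbT (leq_trans _ h1) // leq_addr.
by rewrite expr2 mul0r; case: ifP => // _; rewrite invr_ge0.
Qed.

Lemma m_le_k th tl : ((tl - th).+1 <= padk th tl)%N.
Proof. by rewrite /padk /padexp; apply: up_logP. Qed.

Definition Fpad (R : realType) th tl (i : 'I_(padk th tl)) (v : nat -> R) : R :=
  ((@haar R (padexp th tl)) *m pad0 v th tl) i 0.

Definition hbar (R : realType) th tl (i : nat) : R :=
  (\sum_(0 <= s < (tl - th).+1) @haar_entry R (padexp th tl) i s) / ((tl - th).+1)%:R.

Lemma Fpad_lin (R : realType) th tl (i : 'I_(padk th tl)) (v : nat -> R) :
  (th <= tl)%N ->
  @Fpad R th tl i v = \sum_(0 <= s < (tl - th).+1)
     (@haar_entry R (padexp th tl) i s - hbar R th tl i) * v (th + s)%N.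
Proof.
move=> htl.
set m := (tl - th).+1.
set hn := fun s => @haar_entry R (padexp th tl) i s.
rewrite /Fpad mxE.
under eq_bigr do rewrite !mxE.
rewrite -(big_mkord xpredT (fun s => hn s * (if (s < m)%N then v (th + s)%N -
   (\sum_(th <= t < tl.+1) v t) / m%:R else 0))).
rewrite (@big_cat_nat _ _ _ m) //=; last exact: m_le_k.
rewrite [X in _ + X]big1_seq ?addr0; last first.
  by move=> s /andP[_]; rewrite mem_index_iota => /andP[ms _]; rewrite ltnNge ms mulr0.
rewrite (eq_big_nat _ _ (F2 := fun s => hn s * (v (th + s)%N -
   (\sum_(th <= t < tl.+1) v t) / m%:R))); last by move=> s /andP[_ ->].
have -> : \sum_(th <= t < tl.+1) v t = \sum_(0 <= s < m) v (th + s)%N.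
  rewrite -{1}(add0n th) big_addn subSn //; apply: eq_bigr => s _; by rewrite addnC.
under eq_bigr do rewrite mulrBr.
rewrite sumrB -mulr_suml.
under [RHS]eq_bigr do rewrite mulrBl.
rewrite sumrB -mulr_sumr; congr (_ - _).
rewrite /hbar -/m; ring.
Qed.

Lemma coef_norm (R : realType) th tl (i : nat) :
  (i < padk th tl)%N ->
  \sum_(0 <= s < (tl - th).+1)
     (@haar_entry R (padexp th tl) i s - hbar R th tl i) ^+ 2 <= 1.
Proof.
move=> _.
set m := (tl - th).+1.
set x := fun s => @haar_entry R (padexp th tl) i s.
set c := hbar R th tl i.
have mR : m%:R != 0 :> R by rewrite pnatr_eq0.
have e s : (x s - c) ^+ 2 = x s ^+ 2 - c * (2 * x s - c) by ring.
rewrite (eq_bigr _ (fun s _ => e s)) sumrB -mulr_sumr sumrB -mulr_sumr sumr_const_nat subn0.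
have -> : c * (2 * \sum_(0 <= i0 < m) x i0 - c *+ m) = c ^+ 2 * m%:R.
  rewrite /c /hbar -/m -/x -mulr_natr; field; exact: mR.
apply: le_trans (_ : \sum_(0 <= s < m) x s ^+ 2 <= 1).
  by rewrite lerBlDr lerDl mulr_ge0 ?sqr_ge0.
apply: le_trans (haar_row_norm R (padexp th tl) i).
rewrite [X in _ <= X](@big_cat_nat _ _ _ m) //=; last exact: m_le_k.
by rewrite lerDl; apply: sumr_ge0 => s _; exact: sqr_ge0.
Qed.

Lemma reindex_coef (R : realType) n th tl (b : nat -> R) (z : 'I_n -> R) :
  (th <= tl)%N -> (tl < n)%N ->
  \sum_(t : 'I_n) (if (th <= t <= tl)%N then b (t - th)%N else 0) * z t =
  \sum_(0 <= s < (tl - th).+1) b s * ext z (th + s)%N.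
Proof.
move=> htl tln.
pose G t := (if (th <= t <= tl)%N then b (t - th)%N else 0) * ext z t.
have -> : \sum_(t : 'I_n) (if (th <= t <= tl)%N then b (t - th)%N else 0) * z t =
   \sum_(t < n) G t.
  by apply: eq_bigr => t _; rewrite /G /ext valK.
rewrite -(big_mkord xpredT G).
rewrite (@big_cat_nat _ _ _ th) //=; last by lia.
rewrite big1_seq ?add0r; last first.
  by move=> s /andP[_]; rewrite mem_index_iota => /andP[_ sth]; rewrite /G (leqNgt th s) sth mul0r.
rewrite (@big_cat_nat _ _ _ tl.+1) //=; last by lia.
rewrite [X in _ + X]big1_seq ?addr0; last first.
  by move=> s /andP[_]; rewrite mem_index_iota => /andP[ms _]; rewrite /G (leqNgt s tl) ms andbF mul0r.
rewrite -{1}(add0n th) big_addn subSn //; apply: eq_big_nat => s /andP[_ hs].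
have hs' : (s + th <= tl)%N by lia.
by rewrite /G addnK leq_addl hs' /= addnC.
Qed.

Lemma measurable_le (R : realType) d (T : measurableType d) (g : T -> R) (r : R) :
  measurable_fun setT g -> measurable [set w | g w <= r].
Proof.
move=> mg; have := mg measurableT `]-oo, r]%classic (measurable_itv _).
by rewrite setTI; congr measurable; apply/seteqP; split => w /=; rewrite in_itv /=.
Qed.

Lemma soft_iff (R : realType) (lam c x : R) : 0 <= lam -> 0 <= c ->
  (`|Num.sg x * Num.max (`|x| - lam) 0| <= c) = (`|x| <= lam + c).
Proof.
move=> l0 c0; have [->|x0] := eqVneq x 0.
  by rewrite sgr0 mul0r normr0 c0 addr_ge0.
rewrite normrM normr_sg x0 /= mul1r ger0_norm ?le_max ?lexx ?orbT //.
rewrite ge_max c0 andbT; apply/idP/idP => H; lra.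
Qed.

Lemma ext_add (R : realType) n (u v : 'I_n -> R) (x : nat) :
  ext (fun t => u t + v t) x = ext u x + ext v x.
Proof. by rewrite /ext; case: insub => [t|] //; rewrite addr0. Qed.

Theorem lemma3 (R : realType) (d : measure_display) (T : measurableType d)
  (P : probability T R) (n : nat) (theta : 'I_n -> R)
  (Z : 'I_n -> {RV P >-> R}) (sigma beta : R) :
  0 < sigma -> 0 < beta ->
  mutually_independent P (fun t => (Z t : T -> R)) ->
  (forall t, ('E_P[Z t] = 0)%E) ->
  (forall t, subgaussian P sigma (Z t)) ->
  forall th tl : nat, (th <= tl)%N -> (tl < n)%N ->
  forall i : 'I_(padk th tl),
    let lam := sigma * Num.sqrt (beta * ln n%:R) in
    let H := @haar R (padexp th tl) in
    let Theta := pad0 (ext theta) th tl in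
    (P [set w | let Y := pad0 (ext (fun t => (theta t + Z t w)%R)) th tl in
                (`|(soft lam (H *m Y)) i 0| <= `|(H *m Theta) i 0|)%R ]
     >= (1 - 2 * (n%:R `^ (3 - beta / 8)))%R%:E)%E.
Proof.
move=> s0 b0 HI _ Hsg th tl htl tln i.
cbv zeta.
set lam := sigma * Num.sqrt (beta * ln n%:R).
set H := haar (padexp th tl).
set Theta := pad0 (ext theta) th tl.
pose Zf t : T -> R := Z t.
have mZ t : measurable_fun setT (Zf t) by exact: measurable_funPT.
have n1 : (1 <= n)%N by lia.
have n1R : 1 <= n%:R :> R by rewrite ler1n.
have lnn : 0 <= ln (n%:R : R) by exact: ln_ge0.
have bl : 0 <= beta * ln n%:R by rewrite mulr_ge0 // ltW.
have l0 : 0 <= lam by rewrite /lam mulr_ge0 ?sqrtr_ge0 // ltW.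
pose b s := @haar_entry R (padexp th tl) i s - hbar R th tl i.
pose a (t : 'I_n) := if (th <= t <= tl)%N then b (t - th)%N else 0.
pose X w := \sum_t a t * Zf t w.
have mX : measurable_fun setT X.
  by apply: measurable_sum => t; apply: measurable_funM.
have Xb w : X w = \sum_(0 <= s < (tl - th).+1) b s * ext (fun t => Zf t w) (th + s)%N.
  exact: reindex_coef.
have ha : \sum_t a t ^+ 2 <= 1.
  have -> : \sum_t a t ^+ 2 = \sum_(0 <= s < (tl - th).+1) b s ^+ 2.
    transitivity (\sum_(t : 'I_n) (if (th <= t <= tl)%N then b (t - th)%N ^+ 2 else 0) * 1).
      by apply: eq_bigr => t _; rewrite /a mulr1; case: ifP => _; rewrite ?expr0n.
    rewrite (@reindex_coef R n th tl (fun s => b s ^+ 2) (fun _ => 1) htl tln).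
    apply: eq_big_nat => s /andP[_ hs]; rewrite /ext.
    case: insubP => [u _ _|/negP hn]; first by rewrite mulr1.
    exfalso; apply: hn; lia.
  exact: coef_norm.
pose u0 := (H *m Theta) i 0.
have Fw w : (H *m pad0 (ext (fun t => theta t + Z t w)) th tl) i 0 = u0 + X w.
  have FF v : (H *m pad0 v th tl) i 0 = @Fpad R th tl i v by [].
  rewrite /u0 /Theta !FF !Fpad_lin // Xb -big_split /=.
  by apply: eq_bigr => s _; rewrite ext_add mulrDr.
pose E := [set w | `|u0 + X w| <= lam + `|u0|].
have HE : [set w | let Y := pad0 (ext (fun t => (theta t + Z t w)%R)) th tl in
                (`|(soft lam (H *m Y)) i 0| <= `|(H *m Theta) i 0|)%R ] = E.
  apply/seteqP; split => w /=; rewrite mxE Fw soft_iff //; exact: normr_ge0.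
rewrite HE.
have mE : measurable E.
  apply: measurable_le; apply: measurableT_comp; first exact: normr_measurable.
  by apply: measurable_funD.
pose G := [set w | `|X w| <= lam].
have mG : measurable G.
  by apply: measurable_le; apply: measurableT_comp => //; exact: normr_measurable.
have GE : G `<=` E.
  move=> w; rewrite /G /E /= => Gw; apply: le_trans (ler_normD _ _) _; lra.
have CG : ~` G = [set w | lam < `|\sum_t a t * Zf t w|].
  apply/seteqP; split => w; rewrite /G /X /=.
    by move/negP; rewrite -ltNge.
  by rewrite ltNge => /negP.
have Htail := @tail_two _ _ _ P n Zf mZ HI sigma s0 Hsg a lam ha l0.
rewrite -CG probability_setC // in Htail.
set q := expR (- (lam ^+ 2 / (2 * sigma ^+ 2))) in Htail.
have qE : q = n%:R `^ (- (beta / 2)).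
  rewrite /q /powR ifF; last by rewrite pnatr_eq0; lia.
  congr expR; rewrite /lam exprMn sqr_sqrtr //; field.
  by rewrite gt_eqF.
have qp : q <= n%:R `^ (3 - beta / 8).
  by rewrite qE; apply: ler_powR => //; lra.
have PGfin : P G = (fine (P G))%:E by rewrite fineK // fin_num_measure.
apply: (@le_trans _ _ (P G)); last first.
  by apply: le_measure; rewrite ?inE.
rewrite PGfin lee_fin.
move: Htail; rewrite PGfin -EFinB lee_fin => Htail.
lra.
Qed.
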